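(* Let $P$ be a weakly ranked poset and $f,g\in\mathscr{I}_{1/2}(P)$. Then there exists a single $P$-kernel $\kappa$ whose right KLS-function is $f$ and whose left KLS-function is $g$ if and only if $\overline{\bar g f}=\bar g f$.
   Context: A weakly ranked poset is a locally finite poset $P$ (all intervals finite) with a weak rank function: integers $r_{xy}$ for $x\le y$ with $r_{xy}>0$ for $x<y$ and $r_{xy}+r_{yz}=r_{xz}$. $I(P)=\prod_{x\le y}\mathbb{Z}[t]$ with components $f_{xy}(t)$ is a ring under convolution $(fg)_{xz}=\sum_{x\le y\le z}f_{xy}g_{yz}$ with identity $\delta$ ($\delta_{xx}=1$, $\delta_{xy}=0$ for $x<y$). $\mathscr{I}(P)$ is the subring of $f$ with $\deg f_{xy}\le r_{xy}$; it has the involution $\bar f_{xy}(t)=t^{r_{xy}}f_{xy}(t^{-1})$. $\mathscr{I}_{1/2}(P)$ is the set of $f\in\mathscr{I}(P)$ with $f_{xx}=1$ for all $x$ and $\deg f_{xy}<r_{xy}/2$ for $x<y$. A $P$-kernel is $\kappa\in\mathscr{I}(P)$ with $\kappa_{xx}=1$ for all $x$ and $\kappa^{-1}=\bar\kappa$. For a $P$-kernel $\kappa$ there are unique $f,g\in\mathscr{I}_{1/2}(P)$ with $\bar f=\kappa f$ and $\bar g=g\kappa$; $f$ is the right and $g$ the left KLS-function of $\kappa$. *)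

(* Defs.v *)
From HB Require Import structures.
From mathcomp Require Import all_boot all_order all_algebra.
Set Implicit Arguments. Unset Strict Implicit. Unset Printing Implicit Defensive.
Import Order.TTheory GRing.Theory Num.Theory.
Local Open Scope ring_scope.

(* A weakly ranked poset: a partial order [wle] on an eqType T, locally finite
   (each interval [x,y] is enumerated by the duplicate-free list [witv x y]),
   with a weak rank function [wr]. *)
Record wrposet (T : eqType) := WRPoset {
  wle : rel T;
  wle_refl : forall x, wle x x;
  wle_anti : forall x y, wle x y -> wle y x -> x = y;
  wle_trans : forall x y z, wle x y -> wle y z -> wle x z;
  witv : T -> T -> seq T;
  witv_uniq : forall x y, uniq (witv x y);
  mem_witv : forall x y z, (z \in witv x y) = wle x z && wle z y;
  wr : T -> T -> int;
  wr_pos : forall x y, wle x y -> x != y -> 0 < wr x y;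
  wr_add : forall x y z, wle x y -> wle y z -> wr x y + wr y z = wr x z
}.

Section Incidence.
Variables (T : eqType) (P : wrposet T).

(* Elements of I(P): only the components f x y with x <= y matter. *)
Definition incid := T -> T -> {poly int}.

Definition eqI (f g : incid) : Prop :=
  forall x y, wle P x y -> f x y = g x y.

Definition conv (f g : incid) : incid :=
  fun x z => \sum_(y <- witv P x z) f x y * g y z.

Definition delta : incid := fun x y => if x == y then 1 else 0.

Definition inI (f : incid) : Prop :=
  forall x y, wle P x y -> ((size (f x y))%:Z <= wr P x y + 1).

(* t^n p(t^{-1}) for deg p <= n *)
Definition revpoly (n : nat) (p : {poly int}) : {poly int} :=
  \poly_(i < n.+1) p`_(n - i).

Definition bar (f : incid) : incid :=
  fun x y => revpoly `|wr P x y|%N (f x y).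

Definition inIhalf (f : incid) : Prop :=
  [/\ inI f, (forall x, f x x = 1) &
      forall x y, wle P x y -> x != y ->
        ((size (f x y))%:Z - 1) * 2 < wr P x y].

Definition is_kernel (k : incid) : Prop :=
  [/\ inI k, (forall x, k x x = 1),
      eqI (conv k (bar k)) delta & eqI (conv (bar k) k) delta].

Definition right_KLS (k f : incid) : Prop :=
  inIhalf f /\ eqI (bar f) (conv k f).

Definition left_KLS (k g : incid) : Prop :=
  inIhalf g /\ eqI (bar g) (conv g k).

End Incidence.

(* Main.v *)
Require Import Defs.
From mathcomp Require Import all_boot all_order all_algebra zify.
Set Implicit Arguments. Unset Strict Implicit. Unset Printing Implicit Defensive.
Import Order.TTheory GRing.Theory Num.Theory.
Local Open Scope ring_scope.

Lemma coef_revpoly n p i : (revpoly n p)`_i = if (i <= n)%N then p`_(n - i) else 0.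
Proof. by rewrite /revpoly coef_poly ltnS. Qed.

Lemma revpolyD n p q : revpoly n (p + q) = revpoly n p + revpoly n q.
Proof. by apply/polyP=> i; rewrite coefD !coef_revpoly coefD; case: ifP; rewrite ?addr0. Qed.

Lemma revpolyZ n c p : revpoly n (c *: p) = c *: revpoly n p.
Proof. by apply/polyP=> i; rewrite coefZ !coef_revpoly coefZ; case: ifP; rewrite ?mulr0. Qed.

Lemma revpoly0 n : revpoly n 0 = 0.
Proof. by apply/polyP=> i; rewrite coef_revpoly !coef0 if_same. Qed.

Lemma revpoly_sum n I (r : seq I) (F : I -> {poly int}) :
  revpoly n (\sum_(i <- r) F i) = \sum_(i <- r) revpoly n (F i).
Proof.
elim: r => [|a r IH]; first by rewrite !big_nil revpoly0.
by rewrite !big_cons revpolyD IH.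
Qed.

Lemma revpolyXn n i : (i <= n)%N -> revpoly n 'X^i = 'X^(n - i).
Proof.
move=> le; apply/polyP=> k; rewrite coef_revpoly !coefXn.
case: leqP => hk.
  have -> : (n - k == i)%N = (k == n - i)%N by apply/idP/idP => /eqP e; apply/eqP; lia.
  by [].
by case: eqP => // e; lia.
Qed.

Lemma poly_expand a (p : {poly int}) : (size p <= a.+1)%N ->
  p = \sum_(i < a.+1) p`_i *: 'X^i.
Proof.
move=> hs; rewrite -poly_def; apply/polyP=> i; rewrite coef_poly.
by case: ltnP => // h; rewrite nth_default // (leq_trans hs h).
Qed.

Lemma revpoly_expand a (p : {poly int}) : (size p <= a.+1)%N ->
  revpoly a p = \sum_(i < a.+1) p`_i *: 'X^(a - i).
Proof.
move=> hs; rewrite {1}(poly_expand hs) revpoly_sum.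
by apply: eq_bigr => i _; rewrite revpolyZ revpolyXn // -ltnS.
Qed.

Lemma revpolyM a b (p q : {poly int}) : (size p <= a.+1)%N -> (size q <= b.+1)%N ->
  revpoly (a + b) (p * q) = revpoly a p * revpoly b q.
Proof.
move=> hp hq; rewrite (revpoly_expand hp) (revpoly_expand hq).
rewrite {1}(poly_expand hp) {1}(poly_expand hq).
rewrite mulr_suml revpoly_sum mulr_suml; apply: eq_bigr => i _.
rewrite mulr_sumr revpoly_sum mulr_sumr; apply: eq_bigr => j _.
rewrite -scalerAl -scalerAr scalerA revpolyZ -scalerAl -scalerAr scalerA.
rewrite -!exprD revpolyXn; last by rewrite leq_add // -ltnS.
congr (_ *: 'X^_).
have hi := ltn_ord i; have hj := ltn_ord j; rewrite ltnS in hi hj.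
lia.
Qed.

Lemma revpolyK n (p : {poly int}) : (size p <= n.+1)%N -> revpoly n (revpoly n p) = p.
Proof.
move=> hs; apply/polyP=> i; rewrite !coef_revpoly.
case: leqP => h; first by rewrite leq_subr subKn.
by rewrite nth_default // (leq_trans hs h).
Qed.

Lemma size_revpoly n p : (size (revpoly n p) <= n.+1)%N.
Proof. exact: size_poly. Qed.

From Stdlib Require Import Setoid Morphisms.

Section Inc.
Variables (T : eqType) (P : wrposet T).
Local Notation le := (wle P).
Local Notation itv := (witv P).
Local Notation rn x y := (`|wr P x y|%N).

Lemma wr_xx x : wr P x x = 0.
Proof. have h := wr_add (wle_refl P x) (wle_refl P x); lia. Qed.

Lemma wr_ge0 x y : le x y -> 0 <= wr P x y.
Proof.
move=> h; case: (eqVneq x y) => [->|ne]; first by rewrite wr_xx.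
exact: ltW (wr_pos h ne).
Qed.

Lemma rn_add x y z : le x y -> le y z -> rn x z = (rn x y + rn y z)%N.
Proof.
move=> h1 h2; have := wr_add h1 h2; have := wr_ge0 h1; have := wr_ge0 h2.
lia.
Qed.

Lemma inI_size (a : incid T) x y : inI P a -> le x y -> (size (a x y) <= (rn x y).+1)%N.
Proof. move=> ha h; have := ha x y h; have := wr_ge0 h; lia. Qed.

Lemma size_inI (a : incid T) : (forall x y, le x y -> (size (a x y) <= (rn x y).+1)%N) -> inI P a.
Proof. move=> ha x y h; have := ha x y h; have := wr_ge0 h; lia. Qed.

Lemma mem_itv_l x y : le x y -> x \in itv x y.
Proof. by move=> h; rewrite mem_witv wle_refl. Qed.

Lemma mem_itv_r x y : le x y -> y \in itv x y.
Proof. by move=> h; rewrite mem_witv wle_refl h. Qed.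

Lemma itv_xx x : perm_eq (itv x x) [:: x].
Proof.
apply: uniq_perm => //; first exact: witv_uniq.
move=> z; rewrite mem_witv inE; apply/andP/eqP => [[h1 h2]|->]; last by rewrite wle_refl.
exact: (wle_anti h2 h1).
Qed.

Lemma conv_xx (a b : incid T) x : conv P a b x x = a x x * b x x.
Proof. by rewrite /conv (perm_big _ (itv_xx x)) big_seq1. Qed.

Lemma conv_delta_l a : eqI P (conv P (@delta T) a) a.
Proof.
move=> x y h; rewrite /conv (bigD1_seq x) ?mem_itv_l ?witv_uniq //= /delta eqxx mul1r.
by rewrite big1 ?addr0 // => w hw; rewrite eq_sym (negbTE hw) mul0r.
Qed.

Lemma conv_delta_r a : eqI P (conv P a (@delta T)) a.
Proof.
move=> x y h; rewrite /conv (bigD1_seq y) ?mem_itv_r ?witv_uniq //= /delta eqxx mulr1.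
by rewrite big1 ?addr0 // => w hw; rewrite (negbTE hw) mulr0.
Qed.

Lemma conv_eq a a' b b' : eqI P a a' -> eqI P b b' -> forall x z, conv P a b x z = conv P a' b' x z.
Proof.
move=> ha hb x z; rewrite /conv !big_seq; apply: eq_bigr => y.
by rewrite mem_witv => /andP[h1 h2]; rewrite ha // hb.
Qed.

Lemma itv_filter_l x y w : le x y -> perm_eq (itv y w) [seq z <- itv x w | le y z].
Proof.
move=> hxy; apply: uniq_perm; [exact: witv_uniq | exact: filter_uniq (witv_uniq _ _ _) |].
move=> z; rewrite mem_filter !mem_witv.
case hyz: (le y z) => //=; by rewrite (wle_trans hxy hyz).
Qed.

Lemma itv_filter_r x z w : le z w -> perm_eq (itv x z) [seq y <- itv x w | le y z].
Proof.
move=> hzw; apply: uniq_perm; [exact: witv_uniq | exact: filter_uniq (witv_uniq _ _ _) |].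
move=> y; rewrite mem_filter !mem_witv.
case hyz: (le y z); rewrite ?andbF //= (wle_trans hyz hzw); by rewrite andbT.
Qed.

Lemma conv_assoc a b c x w : conv P a (conv P b c) x w = conv P (conv P a b) c x w.
Proof.
rewrite /conv.
transitivity (\sum_(y <- itv x w) \sum_(z <- itv x w)
   (if le y z then a x y * (b y z * c z w) else 0)).
  rewrite big_seq [RHS]big_seq; apply: eq_bigr => y; rewrite mem_witv => /andP[hxy hyw].
  by rewrite mulr_sumr -big_mkcond /= (perm_big _ (itv_filter_l w hxy)) big_filter.
rewrite exchange_big /=; apply: eq_big_seq => z; rewrite mem_witv => /andP[hxz hzw].
rewrite mulr_suml (perm_big _ (itv_filter_r x hzw)) big_filter big_mkcond /=.
by rewrite [RHS]big_mkcond; apply: eq_bigr => y _; case: ifP; rewrite ?mulrA.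
Qed.

Lemma eqI_refl a : eqI P a a. Proof. by []. Qed.
Lemma eqI_sym a b : eqI P a b -> eqI P b a. Proof. by move=> h x y hxy; rewrite h. Qed.
Lemma eqI_trans a b c : eqI P a b -> eqI P b c -> eqI P a c.
Proof. by move=> h1 h2 x y hxy; rewrite h1 // h2. Qed.

#[local] Instance eqI_equiv : Equivalence (eqI P).
Proof. split; [exact: eqI_refl | exact: eqI_sym | exact: eqI_trans]. Qed.

#[local] Instance conv_proper : Proper (eqI P ==> eqI P ==> eqI P) (conv P).
Proof. by move=> a a' ha b b' hb x y _; apply: conv_eq. Qed.

#[local] Instance bar_proper : Proper (eqI P ==> eqI P) (bar P).
Proof. by move=> a a' ha x y h; rewrite /bar ha. Qed.

Lemma assocI a b c : eqI P (conv P a (conv P b c)) (conv P (conv P a b) c).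
Proof. by move=> x y _; apply: conv_assoc. Qed.

Lemma bar_inI a : inI P (bar P a).
Proof. by apply: size_inI => x y _; apply: size_revpoly. Qed.

Lemma barK a : inI P a -> eqI P (bar P (bar P a)) a.
Proof. by move=> ha x y h; rewrite /bar revpolyK // inI_size. Qed.

Lemma bar_conv a b : inI P a -> inI P b -> eqI P (bar P (conv P a b)) (conv P (bar P a) (bar P b)).
Proof.
move=> ha hb x z hxz; rewrite /bar /conv revpoly_sum big_seq [RHS]big_seq.
apply: eq_bigr => y; rewrite mem_witv => /andP[h1 h2].
by rewrite (rn_add h1 h2) revpolyM // inI_size.
Qed.

Lemma bar_delta : eqI P (bar P (@delta T)) (@delta T).
Proof.
move=> x y h; rewrite /bar /delta; case: eqP => [<-|_]; last exact: revpoly0.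
by rewrite wr_xx /= -(expr0 'X) revpolyXn.
Qed.

Lemma bar_diag a x : a x x = 1 -> bar P a x x = 1.
Proof. by move=> h; rewrite /bar h wr_xx /= -(expr0 'X) revpolyXn. Qed.

Lemma conv_inI a b : inI P a -> inI P b -> inI P (conv P a b).
Proof.
move=> ha hb; apply: size_inI => x z hxz; rewrite /conv big_seq.
apply: (big_ind (fun p : {poly int} => (size p <= (rn x z).+1)%N)).
- by rewrite size_poly0.
- by move=> p q hp hq; apply: leq_trans (size_polyD _ _) _; rewrite geq_max hp hq.
move=> y; rewrite mem_witv => /andP[h1 h2].
apply: leq_trans (size_mul_leq _ _) _; rewrite (rn_add h1 h2).
have := inI_size ha h1; have := inI_size hb h2; lia.
Qed.


Lemma witv_lt x y z : le x y -> le y z -> y != z -> (size (itv x y) < size (itv x z))%N.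
Proof.
move=> h1 h2 ne.
have nz : z \notin itv x y.
  rewrite mem_witv; apply/negP => /andP[_ h3]; by rewrite (wle_anti h2 h3) eqxx in ne.
apply: (@uniq_leq_size _ (z :: itv x y) (itv x z)); first by rewrite /= nz witv_uniq.
move=> u; rewrite inE => /orP[/eqP->|].
  by rewrite mem_itv_r // (wle_trans h1 h2).
by rewrite !mem_witv => /andP[h3 h4]; rewrite h3 (wle_trans h4 h2).
Qed.

Lemma size_itv_gt0 x z : le x z -> (0 < size (itv x z))%N.
Proof. by move=> h; have := mem_itv_l h; case: (itv x z). Qed.

Fixpoint invn (f : incid T) (n : nat) (x z : T) : {poly int} :=
  match n with
  | 0 => 0
  | n'.+1 => if x == z then 1 else
      - \sum_(y <- itv x z | y != z) invn f n' x y * f y z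
  end.

Definition inv f : incid T := fun x z => invn f (size (itv x z)) x z.

Lemma invn_stable f n m x z : le x z -> (size (itv x z) <= n)%N ->
  (size (itv x z) <= m)%N -> invn f n x z = invn f m x z.
Proof.
elim: n m x z => [|n IH] [|m] x z hxz hn hm.
- by [].
- by move: (size_itv_gt0 hxz); rewrite lt0n -leqn0 hn.
- by move: (size_itv_gt0 hxz); rewrite lt0n -leqn0 hm.
cbn [invn]; case: eqP => // _; congr (- _).
rewrite big_seq_cond [RHS]big_seq_cond; apply: eq_bigr => y /andP[]; rewrite mem_witv => /andP[h1 h2] ne.
have lt := witv_lt h1 h2 ne.
by rewrite (IH m) // -ltnS; [apply: leq_trans lt hn | apply: leq_trans lt hm].
Qed.

Lemma inv_diag f x : inv f x x = 1.
Proof. by rewrite /inv (perm_size (itv_xx x)) /= eqxx. Qed.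

Lemma inv_rec f x z : le x z -> x != z ->
  inv f x z = - \sum_(y <- itv x z | y != z) inv f x y * f y z.
Proof.
move=> hxz ne; rewrite /inv; have := size_itv_gt0 hxz.
case e: (size (itv x z)) => [|n] // _; cbn [invn]; rewrite (negbTE ne); congr (- _).
rewrite big_seq_cond [RHS]big_seq_cond; apply: eq_bigr => y /andP[]; rewrite mem_witv => /andP[h1 h2] ne'.
have lt := witv_lt h1 h2 ne'; rewrite e ltnS in lt.
by rewrite /inv (invn_stable _ h1 lt (leqnn _)).
Qed.

Lemma conv_inv_l f : (forall x, f x x = 1) -> eqI P (conv P (inv f) f) (@delta T).
Proof.
move=> hf x z hxz; case: (eqVneq x z) => [<-|ne].
  by rewrite conv_xx inv_diag hf /delta eqxx mulr1.
rewrite /conv (bigD1_seq z) ?mem_itv_r ?witv_uniq //= hf mulr1 (inv_rec _ hxz ne).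
by rewrite addNr /delta (negbTE ne).
Qed.

Lemma inv_inI f : (forall x, f x x = 1) -> inI P f -> inI P (inv f).
Proof.
move=> hd hf; apply: size_inI => x z.
move: {-1}(size (itv x z)) (leqnn (size (itv x z))) => n.
elim: n x z => [|n IH] x z hn hxz.
  by move: (size_itv_gt0 hxz); rewrite lt0n -leqn0 hn.
case: (eqVneq x z) => [<-|ne]; first by rewrite inv_diag size_poly1.
rewrite inv_rec // size_polyN big_seq_cond.
apply: (big_ind (fun p : {poly int} => (size p <= (rn x z).+1)%N)).
- by rewrite size_poly0.
- by move=> p q hp hq; apply: leq_trans (size_polyD _ _) _; rewrite geq_max hp hq.
move=> y /andP[]; rewrite mem_witv => /andP[h1 h2] ne'.
have lt := witv_lt h1 h2 ne'.
apply: leq_trans (size_mul_leq _ _) _; rewrite (rn_add h1 h2).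
have := IH x y (leq_trans lt hn : (size (itv x y) < n.+1)%N) h1.
have := inI_size hf h2.
move: lt hn => _ _; lia.
Qed.

Lemma conv_inv_r f : (forall x, f x x = 1) -> eqI P (conv P f (inv f)) (@delta T).
Proof.
move=> hd.
have hd' : forall x, inv f x x = 1 := inv_diag f.
have e : eqI P f (inv (inv f)).
  symmetry.
  transitivity (conv P (inv (inv f)) (conv P (inv f) f)).
    rewrite conv_inv_l // conv_delta_r. reflexivity.
  rewrite assocI conv_inv_l // conv_delta_l. reflexivity.
transitivity (conv P (inv (inv f)) (inv f)); last exact: conv_inv_l.
by apply: conv_proper.
Qed.

Lemma main_sec f g : inIhalf P f -> inIhalf P g ->
  ((exists k : incid T, is_kernel P k /\ right_KLS P k f /\ left_KLS P k g) <->
   eqI P (bar P (conv P (bar P g) f)) (conv P (bar P g) f)).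
Proof.
move=> hf hg; case: (hf) => fI fd _; case: (hg) => gI gd _.
split.
  case=> k [[kI kd kk1 kk2] [[_ rf] [_ lg]]].
  rewrite (bar_conv (bar_inI g) fI) (barK gI) rf assocI -lg. reflexivity.
move=> H.
pose F := inv f.
have Fd : forall x, F x x = 1 := inv_diag f.
have FI : inI P F := inv_inI fd fI.
have Ff : eqI P (conv P F f) (@delta T) := conv_inv_l fd.
have fF : eqI P (conv P f F) (@delta T) := conv_inv_r fd.
have bFbf : eqI P (conv P (bar P F) (bar P f)) (@delta T).
  rewrite -(bar_conv FI fI) Ff bar_delta. reflexivity.
have bfbF : eqI P (conv P (bar P f) (bar P F)) (@delta T).
  rewrite -(bar_conv fI FI) fF bar_delta. reflexivity.
have gbf : eqI P (conv P g (bar P f)) (conv P (bar P g) f).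
  rewrite -H (bar_conv (bar_inI g) fI) (barK gI). reflexivity.
exists (conv P (bar P f) F).
have kI : inI P (conv P (bar P f) F) := conv_inI (bar_inI f) FI.
have bk : eqI P (bar P (conv P (bar P f) F)) (conv P f (bar P F)).
  rewrite (bar_conv (bar_inI f) FI) (barK fI). reflexivity.
split; [split|split; split].
- exact: kI.
- by move=> x; rewrite conv_xx bar_diag // Fd mulr1.
- rewrite bk -assocI (assocI F f) Ff conv_delta_l bfbF. reflexivity.
- rewrite bk -assocI (assocI (bar P F) (bar P f)) bFbf conv_delta_l fF. reflexivity.
- exact: hf.
- symmetry; rewrite -assocI Ff conv_delta_r. reflexivity.
- exact: hg.
- symmetry; rewrite assocI gbf -assocI fF conv_delta_r. reflexivity.
Qed.

End Inc.

Theorem proposition2p7 (T : eqType) (P : wrposet T) (f g : incid T) :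
  inIhalf P f -> inIhalf P g ->
  ((exists k : incid T, is_kernel P k /\ right_KLS P k f /\ left_KLS P k g) <->
   eqI P (bar P (conv P (bar P g) f)) (conv P (bar P g) f)).
Proof. exact: main_sec. Qed.
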